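(* Let $k\ge 2$. For every deterministic algorithm that solves the $k$-ribbon problem on oriented line graphs of every length with identical agents (even when endpoints know they are endpoints), and for every $n$, there is an execution on a line of $n$ agents (some choice of starting agent) in which some agent has not decided its color before round $(2-\frac1k)n-3$.
   Context: Message passing model (1D): line of $n$ agents, synchronous rounds, reliable messages between neighbors, identical agents with a common sense of direction and no knowledge of $n$ or their position; initially only one arbitrary starting agent is awake and other agents wake upon receiving a message. The $k$-ribbon problem: every agent outputs a color in $\{1,\dots,k\}$ with each color class contiguous, colors increasing from left to right, and class sizes differing by at most $1$. *)

(* Defs.v *)
From mathcomp Require Import all_boot.
Unset Printing Implicit Defensive.

(* A deterministic distributed algorithm for identical agents on an oriented
   line (common sense of direction: left/right ports are distinguished).
   Every agent runs the same code; the only local input is whether it has a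
   left neighbour and whether it has a right neighbour (so endpoints know
   they are endpoints).
   - [start hl hr]  : initial state of the (unique) initially awake agent;
   - [wake hl hr ml mr] : state of a sleeping agent woken up in a round in
     which it received message [ml] from the left and [mr] from the right
     (at least one of them present);
   - [step s ml mr] : state update of an awake agent;
   - [sendL s], [sendR s] : message (if any) sent to the left/right neighbour
     by an awake agent in state [s] during the next round;
   - [decide s] : [Some c] iff the agent has output colour [c] in state [s]. *)
Record Alg : Type := mkAlg {
  St : Type;
  Msg : Type;
  start : bool -> bool -> St;
  wake : bool -> bool -> option Msg -> option Msg -> St;
  step : St -> option Msg -> option Msg -> St;
  sendL : St -> option Msg;
  sendR : St -> option Msg;
  decide : St -> option nat
}.

(* Configuration after [t] synchronous rounds on a line of [n] agents
   (indices 0..n-1, left to right) where agent [p] is the starting agent.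
   [None] = asleep (or out of range). *)
Fixpoint conf (A : Alg) (n p t : nat) : nat -> option (St A) :=
  match t with
  | 0 => fun i => if (i == p) && (i < n) then Some (start A (0 < i) (i.+1 < n))
                  else None
  | t'.+1 =>
      let c := conf A n p t' in
      fun i =>
        let ml := if 0 < i then obind (sendR A) (c i.-1) else None in
        let mr := if i.+1 < n then obind (sendL A) (c i.+1) else None in
        if i < n then
          match c i with
          | Some s => Some (step A s ml mr)
          | None => if isSome ml || isSome mr
                    then Some (wake A (0 < i) (i.+1 < n) ml mr)
                    else None
          end
        else None
  end.

Definition output (A : Alg) (n p t i : nat) : option nat :=
  obind (decide A) (conf A n p t i).

Definition is_ribbon (k n : nat) (c : nat -> nat) : Prop :=
  (forall i, i < n -> 1 <= c i <= k) /\
  (forall i j l, i <= j -> j <= l -> l < n -> c i = c l -> c j = c i) /\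
  (forall i j, i <= j -> j < n -> c i <= c j) /\
  (forall a b, 1 <= a <= k -> 1 <= b <= k ->
     count (fun i => c i == a) (iota 0 n) <= count (fun i => c i == b) (iota 0 n) + 1).

(* [A] solves the k-ribbon problem: on every line length n >= 1 and for every
   starting agent p, every agent eventually decides, and the colours it
   decides (its first, irrevocable output) form a k-ribbon. *)
Definition solves_ribbon (k : nat) (A : Alg) : Prop :=
  forall n p, 0 < n -> p < n ->
  exists c : nat -> nat, is_ribbon k n c /\
    forall i, i < n -> exists t, output A n p t i = Some (c i) /\
                              forall t', t' < t -> output A n p t' i = None.

(* Main.v *)
Require Import Defs.
From mathcomp Require Import all_boot zify.

Lemma asleep (A : Alg) N t j : t < j -> conf A N 0 t j = None.
Proof.
elim: t j => [|t IH] j Hj /=.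
  by case: j Hj.
have E1 : conf A N 0 t j = None by apply: IH; lia.
have E2 : conf A N 0 t j.-1 = None by apply: IH; lia.
have E3 : conf A N 0 t j.+1 = None by apply: IH; lia.
by rewrite E1 E2 E3 /=; case: (0 < j); case: (j.+1 < N); case: (j < N).
Qed.

Lemma indist (A : Alg) n n' t j : j < n -> n <= n' -> t + j + 2 < 2 * n ->
  conf A n 0 t j = conf A n' 0 t j.
Proof.
move=> + Hnn'; elim: t j => [|t IH] j Hj Ht.
  rewrite /=; case: j Hj Ht => [|j] Hj Ht /=.
    have -> : (0 < n) = true by apply/idP; lia.
    have -> : (0 < n') = true by apply/idP; lia.
    have -> : (1 < n) = true by apply/idP; lia.
    by have -> : (1 < n') = true by apply/idP; lia.
  done.
case: (leqP j t.+1) => Hjt; last by rewrite (asleep A n _ _ Hjt) (asleep A n' _ _ Hjt).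
rewrite /=.
have Hj1 : j.+1 < n by lia.
have E1 : conf A n 0 t j = conf A n' 0 t j by apply: IH; lia.
have E3 : conf A n 0 t j.+1 = conf A n' 0 t j.+1 by apply: IH; lia.
have E2 : 0 < j -> conf A n 0 t j.-1 = conf A n' 0 t j.-1.
  move=> Hj0; apply: IH; lia.
have -> : (j.+1 < n') = true by apply/idP; lia.
have -> : (j < n') = true by apply/idP; lia.
rewrite Hj1 Hj E1 E3.
case: (posnP j) => [->|Hj0] //=.
by rewrite E2.
Qed.

Lemma sum_ind lo hi x : \sum_(lo <= b < hi) (x == b) = (lo <= x < hi).
Proof.
elim: hi => [|hi IH]; first by rewrite big_geq //; case: (lo <= x).
case: (leqP lo hi) => H.
  rewrite big_nat_recr //= IH.
  case: (ltngtP x hi) => [h|h|->]; case: (leqP lo x) => h2 /=; lia.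
rewrite big_geq //; lia.
Qed.

Lemma sum_count k m (c : nat -> nat) : (forall i, i < m -> 1 <= c i <= k) ->
  \sum_(1 <= b < k.+1) count (fun i => c i == b) (iota 0 m) = m.
Proof.
elim: m => [|m IH] H; first by rewrite big1.
rewrite -[m.+1]addn1 iotaD.
under eq_bigr => b _ do rewrite count_cat /= addn0.
rewrite big_split /= IH; last by move=> i hi; apply: H; lia.
rewrite sum_ind; have := H m (ltnSn m); move=> /andP [h1 h2]; rewrite h1 ltnS h2 addn1 //.
Qed.

Definition cnt n (c : nat -> nat) a := count (fun i => c i == a) (iota 0 n).

Lemma rib_upper k n c : is_ribbon k n c -> k * cnt n c 1 <= n + k.
Proof.
case: k => [|k]; first by [].
move=> [Hr [_ [_ Hs]]].
have -> : n + k.+1 = \sum_(1 <= b < k.+2) (cnt n c b + 1).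
  by rewrite big_split /= sum_count // sum_nat_const_nat; lia.
have -> : k.+1 * cnt n c 1 = \sum_(1 <= b < k.+2) cnt n c 1.
  by rewrite sum_nat_const_nat; lia.
rewrite big_nat_cond [X in _ <= X]big_nat_cond.
apply: leq_sum => b /andP [/andP [h1 h2] _].
apply: Hs; lia.
Qed.

Lemma rib_lower k n c : is_ribbon k n c -> n <= k * (cnt n c 1 + 1).
Proof.
case: k => [|k] [Hr [_ [_ Hs]]].
  by case: n Hr Hs => // n Hr _; have := Hr 0 isT; lia.
have -> : k.+1 * (cnt n c 1 + 1) = \sum_(1 <= b < k.+2) (cnt n c 1 + 1).
  by rewrite sum_nat_const_nat; lia.
rewrite -{1}(sum_count k.+1 n c Hr).
rewrite big_nat_cond [X in _ <= X]big_nat_cond.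
apply: leq_sum => b /andP [/andP [h1 h2] _].
apply: Hs; lia.
Qed.

Lemma rib_pref k n c i : is_ribbon k n c -> i < n -> c i = 1 -> i.+1 <= cnt n c 1.
Proof.
move=> [Hr [_ [Hm _]]] Hi Hci.
rewrite /cnt -(subnKC Hi) iotaD count_cat.
have : all (fun j => c j == 1) (iota 0 i.+1).
  apply/allP => j; rewrite mem_iota => /andP [_ hj].
  have hj' : j < n by lia.
  have := Hr j hj'; have := Hm j i ltac:(lia) Hi; rewrite Hci.
  move=> a b; apply/eqP; lia.
rewrite all_count size_iota => /eqP ->; lia.
Qed.

Lemma rib_suf k n c i : is_ribbon k n c -> i < n -> c i <> 1 -> cnt n c 1 <= i.
Proof.
move=> [Hr [_ [Hm _]]] Hi Hci.
rewrite /cnt -(subnKC (ltnW Hi)) iotaD count_cat.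
have -> : count (fun j => c j == 1) (iota (0 + i) (n - i)) = 0.
  apply/eqP; rewrite -leqn0 leqNgt -has_count; apply/hasP => [[j]].
  rewrite mem_iota => /andP [h1 h2] /eqP hj.
  have := Hr i Hi; have := Hm i j h1 ltac:(lia); rewrite hj => a b; lia.
rewrite addn0; apply: leq_trans (count_size _ _) _; rewrite size_iota //.
Qed.

Theorem theorem7 (k : nat) (A : Alg) :
  2 <= k -> solves_ribbon k A ->
  forall n, 0 < n ->
  exists p, p < n /\ exists i, i < n /\
    forall t, k * t + 3 * k < (2 * k - 1) * n -> output A n p t i = None.
Proof.
move=> hk hsol n hn.
case: (ltnP (3*k) ((2*k-1)*n)) => Hbig; last first.
  exists 0; split => //; exists 0; split => // t Ht; exfalso; lia.
set q := n %/ k.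
have Hq1 : q * k <= n := leq_trunc_div n k.
have Hq2 : n < q.+1 * k := ltn_ceil n (ltn_trans (isT : 0 < 1) hk).
have Hi : q.+1 < n.
  case: (leqP n 2) => hn2; last nia.
  have : q = 0 by nia.
  move=> ->; nia.
exists 0; split => //; exists q.+1; split => // t Ht.
have Htj : t + q.+1 + 2 < 2 * n by nia.
have [c [Hc Hdc]] := hsol n 0 hn hn.
have hn' : 0 < n + 3 * k by lia.
have [c' [Hc' Hdc']] := hsol (n + 3*k) 0 hn' hn'.
have Hneq : c q.+1 <> 1.
  move=> H; have := rib_pref _ _ _ _ Hc Hi H; have := rib_upper _ _ _ Hc; nia.
have Heq1 : c' q.+1 = 1.
  case: (eqVneq (c' q.+1) 1) => // H; exfalso.
  have := rib_suf _ _ _ _ Hc' (ltac:(lia) : q.+1 < n + 3 * k) (elimN eqP H).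
  have := rib_lower _ _ _ Hc'; nia.
have [t0 [H0 H0b]] := Hdc q.+1 Hi.
have [t1 [H1 H1b]] := Hdc' q.+1 ltac:(lia).
case E: (output A n 0 t q.+1) => [x|] //; exfalso.
have Ht0 : t0 <= t by case: (leqP t0 t) => // h; rewrite H0b in E.
have Hout : forall s, s <= t0 -> output A n 0 s q.+1 = output A (n + 3 * k) 0 s q.+1.
  by move=> s hs; rewrite /output (indist A n (n + 3 * k)) //; lia.
case: (ltngtP t0 t1) => h.
- by have := H1b t0 h; rewrite -Hout // H0.
- by have := H0b t1 h; rewrite Hout ?(ltnW h) // H1.
- by move: H0; rewrite Hout // h H1 => -[] /esym; rewrite Heq1.
Qed.
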